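(* Let $\mathcal P=\{a\otimes b:\ a\in\Delta^3,\ b\in\Delta^4\}$, where $(a\otimes b)_{(r,s)}=a_rb_s$. Let $W=a\otimes b\in\mathcal P$. If the AdaBoost step on $M_0$ from $W$ selects a column $A_j$, then the updated state is $W'=a'\otimes b$, where $a'$ is the one-step AdaBoost update of $a$ on $L_A$ using column $j$, i.e. $a'_r=a_r/(1+\mu(L_A)_{rj})$ with $\mu=(a^\top L_A)_j$. If it selects a column $B_j$, then $W'=a\otimes b'$, where $b'$ is the one-step update of $b$ on $L_B$ using column $j$. Hence $\mathcal P$ is invariant under the exhaustive AdaBoost dynamics on $M_0$.
   Context: Let $$L_A=\begin{pmatrix}1&1&-1&-1\\-1&1&1&1\\1&-1&-1&1\\1&-1&1&-1\end{pmatrix},\qquad L_B=\begin{pmatrix}1&1&-1&-1\\-1&1&1&1\\1&-1&-1&1\\1&-1&1&-1\\1&-1&1&1\end{pmatrix}.$$ The $20\times 8$ matrix $M_0$ has rows indexed by $(r,s)\in\{1,\dots,4\}\times\{1,\dots,5\}$ and columns $A_1,\dots,A_4,B_1,\dots,B_4$, with $M_0((r,s),A_j)=(L_A)_{rj}$, $M_0((r,s),B_j)=(L_B)_{sj}$. Exhaustive AdaBoost on a matrix $M\in\{-1,+1\}^{m\times N}$ maps $D\in\Delta^{m-1}$ to $D'$ with $D'(i)=D(i)/(1+r M_{ij^*})$, where $j^*=\min\operatorname{argmax}_j (D^\top M)_j$ and $r=(D^\top M)_{j^*}$. The one-step update of a distribution $u$ on the rows of a sign matrix $L$ using column $j$ is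 $u'_i=u_i/(1+\mu L_{ij})$ with $\mu=(u^\top L)_j$. $\Delta^{k}$ denotes the probability simplex in $\mathbb R^{k+1}$. *)

(* Defs.v *)
From HB Require Import structures.
From mathcomp Require Import all_boot all_order all_algebra.
Set Implicit Arguments. Unset Strict Implicit. Unset Printing Implicit Defensive.
Import Order.TTheory GRing.Theory Num.Theory.
Local Open Scope ring_scope.

Section Defs.
Variable R : realFieldType.

Definition in_simplex (I : finType) (u : I -> R) : Prop :=
  (forall i, 0 <= u i) /\ \sum_i u i = 1.

Definition edge (I : finType) (N : nat) (L : I -> 'I_N -> R) (u : I -> R)
  (j : 'I_N) : R := \sum_i u i * L i j.

Definition is_jstar (I : finType) (N : nat) (L : I -> 'I_N -> R) (u : I -> R)
  (j : 'I_N) : Prop :=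
  (forall k, edge L u k <= edge L u j) /\
  (forall k, edge L u k = edge L u j -> (j <= k)%N).

(* One-step update of u on L using column j:
   u'_i = u_i / (1 + mu L_{ij}) with mu = (u^T L)_j.
   The exhaustive AdaBoost map is this update with j = j*. *)
Definition update (I : finType) (N : nat) (L : I -> 'I_N -> R) (u : I -> R)
  (j : 'I_N) : I -> R :=
  fun i => u i / (1 + edge L u j * L i j).

Definition entry (s : seq (seq R)) (r c : nat) : R := nth 0 (nth [::] s r) c.

Definition LA_rows : seq (seq R) :=
  [:: [:: 1; 1; -1; -1];
      [:: -1; 1; 1; 1];
      [:: 1; -1; -1; 1];
      [:: 1; -1; 1; -1]].

Definition LB_rows : seq (seq R) :=
  [:: [:: 1; 1; -1; -1];
      [:: -1; 1; 1; 1];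
      [:: 1; -1; -1; 1];
      [:: 1; -1; 1; -1];
      [:: 1; -1; 1; 1]].

Definition LA : 'I_4 -> 'I_4 -> R := fun r j => entry LA_rows r j.
Definition LB : 'I_5 -> 'I_4 -> R := fun s j => entry LB_rows s j.

(* Columns of M0: 'I_(4+4); lshift 4 j is A_{j+1}, rshift 4 j is B_{j+1},
   so the index order is A_1,...,A_4,B_1,...,B_4. *)
Definition colA (j : 'I_4) : 'I_(4 + 4) := lshift 4 j.
Definition colB (j : 'I_4) : 'I_(4 + 4) := rshift 4 j.

Definition M0 : 'I_4 * 'I_5 -> 'I_(4 + 4) -> R :=
  fun p c => match split c with
             | inl j => LA p.1 j
             | inr j => LB p.2 j
             end.

Definition tensor (a : 'I_4 -> R) (b : 'I_5 -> R) : 'I_4 * 'I_5 -> R :=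
  fun p => a p.1 * b p.2.

End Defs.

(* Main.v *)
Require Import Defs.
From HB Require Import structures.
From mathcomp Require Import all_boot all_order all_algebra.
From mathcomp Require Import ring lra.
Import Order.TTheory GRing.Theory Num.Theory.
Local Open Scope ring_scope.

Section H.
Variable R : realFieldType.

Lemma edge_tensorA (a : 'I_4 -> R) (b : 'I_5 -> R) j :
  \sum_s b s = 1 -> edge (@M0 R) (tensor a b) (colA j) = edge (@LA R) a j.
Proof.
move=> hb; rewrite /edge -(pair_bigA _ (fun r s => tensor a b (r, s) * @M0 R (r, s) (colA j))) /=.
apply: eq_bigr => r _.
under eq_bigr => s _ do rewrite /M0 /colA /tensor (unsplitK (inl _ j)) /= mulrAC.
by rewrite -mulr_sumr hb mulr1.
Qed.

Lemma edge_tensorB (a : 'I_4 -> R) (b : 'I_5 -> R) j :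
  \sum_r a r = 1 -> edge (@M0 R) (tensor a b) (colB j) = edge (@LB R) b j.
Proof.
move=> ha; rewrite /edge -(pair_bigA _ (fun r s => tensor a b (r, s) * @M0 R (r, s) (colB j))) /=.
rewrite exchange_big /=.
apply: eq_bigr => s _.
under eq_bigr => r _ do rewrite /M0 /colB /tensor (unsplitK (inr _ j)) /= -mulrA mulrC.
by rewrite -mulr_sumr ha mulr1.
Qed.

Lemma update_simplex (I : finType) N (L : I -> 'I_N -> R) u j :
  in_simplex u -> (forall i, L i j = 1 \/ L i j = -1) ->
  0 <= edge L u j -> edge L u j < 1 -> in_simplex (update L u j).
Proof.
move=> [u0 u1] hL m0 m1; set mu := edge L u j.
have hmu : mu = edge L u j by [].
have hd : forall i, 0 < 1 + mu * L i j.
  by move=> i; case: (hL i) => ->; lra.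
split.
  by move=> i; rewrite /update -/mu; apply: divr_ge0 => //; apply: ltW.
have hn : 1 - mu * mu != 0 by apply/eqP; nra.
have e : forall i, update L u j i = (u i - mu * (u i * L i j)) / (1 - mu * mu).
  move=> i; rewrite /update -/mu; case: (hL i) => ->.
    have h1 : 1 + mu * 1 != 0 by apply/eqP; lra.
    have h2 : 1 - mu != 0 by apply/eqP; lra.
    by field; repeat (apply/andP; split); apply/eqP; lra.
  have h1 : 1 + mu * -1 != 0 by apply/eqP; lra.
  have h2 : 1 + mu != 0 by apply/eqP; lra.
  by field; repeat (apply/andP; split); apply/eqP; lra.
rewrite (eq_bigr _ (fun i _ => e i)) -mulr_suml sumrB -mulr_sumr.
by rewrite u1 -/(edge L u j) -/mu divff.
Qed.

Lemma LA_pm (i j : 'I_4) : @LA R i j = 1 \/ @LA R i j = -1.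
Proof.
case: i => [[|[|[|[|i]]]] Hi] //; case: j => [[|[|[|[|j]]]] Hj] //;
rewrite /LA /entry /=; by [left|right].
Qed.

Lemma LB_pm (i : 'I_5) (j : 'I_4) : @LB R i j = 1 \/ @LB R i j = -1.
Proof.
case: i => [[|[|[|[|[|i]]]]] Hi] //; case: j => [[|[|[|[|j]]]] Hj] //;
rewrite /LB /entry /=; by [left|right].
Qed.

Lemma LA01 (a : 'I_4 -> R) : edge (@LA R) a ord0 + edge (@LA R) a (lift ord0 ord0) = 2 * a ord0.
Proof.
rewrite /edge !big_ord_recl !big_ord0 /LA /entry /=.
set x1 := a (lift ord0 ord0).
set x2 := a (lift ord0 (lift ord0 ord0)).
set x3 := a (lift ord0 (lift ord0 (lift ord0 ord0))).
clearbody x1 x2 x3; ring.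
Qed.

End H.

Theorem lemma2 (R : realFieldType) (a : 'I_4 -> R) (b : 'I_5 -> R) :
  in_simplex a -> in_simplex b ->
  (forall j : 'I_4, is_jstar (@M0 R) (tensor a b) (colA j) ->
     update (@M0 R) (tensor a b) (colA j) =1 tensor (update (@LA R) a j) b) /\
  (forall j : 'I_4, is_jstar (@M0 R) (tensor a b) (colB j) ->
     update (@M0 R) (tensor a b) (colB j) =1 tensor a (update (@LB R) b j)) /\
  (forall c : 'I_(4 + 4), is_jstar (@M0 R) (tensor a b) c ->
     edge (@M0 R) (tensor a b) c < 1 ->
     exists (a' : 'I_4 -> R) (b' : 'I_5 -> R),
       [/\ in_simplex a', in_simplex b' &
           update (@M0 R) (tensor a b) c =1 tensor a' b']).
Proof.
move=> [a0 a1] [b0 b1].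
have PA : forall j, update (@M0 R) (tensor a b) (colA j) =1 tensor (update (@LA R) a j) b.
  move=> j [r s]; rewrite /update edge_tensorA // /tensor /M0 /colA (unsplitK (inl _ j)) /=.
  by rewrite mulrAC.
have PB : forall j, update (@M0 R) (tensor a b) (colB j) =1 tensor a (update (@LB R) b j).
  move=> j [r s]; rewrite /update edge_tensorB // /tensor /M0 /colB (unsplitK (inr _ j)) /=.
  by rewrite mulrA.
split; first by move=> j _; exact: PA.
split; first by move=> j _; exact: PB.
move=> c [hmax _] hlt.
have hge : 0 <= edge (@M0 R) (tensor a b) c.
  have h0 := hmax (colA ord0); have h1 := hmax (colA (lift ord0 ord0)).
  rewrite !edge_tensorA // in h0 h1.
  have := @LA01 R a; have := a0 ord0; lra.
rewrite -(splitK c) in hge hlt *; case: (split c) hge hlt => j /= hge hlt.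
- exists (update (@LA R) a j), b.
  have hge' := hge; have hlt' := hlt.
  rewrite -/(colA j) edge_tensorA // in hge' hlt'.
  split; [ | by split | exact: (PA j)].
  by apply: update_simplex => // i; apply: LA_pm.
- exists a, (update (@LB R) b j).
  have hge' := hge; have hlt' := hlt.
  rewrite -/(colB j) edge_tensorB // in hge' hlt'.
  split; [ by split | | exact: (PB j)].
  by apply: update_simplex => // i; apply: LB_pm.
Qed.
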